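(* Assume the setting described in the context, with $\beta$ separable over $k$, and assume that it is not the case that [$D=k$, $\rho=\mathrm{id}_k$, $\epsilon=1$, $\dim_kV=2$ and $h$ is isotropic]. Let $x\in\mathcal B(H)$ and $\Lambda\in\mathrm{Latt}^1_h(V)$ satisfy $\mathrm{End}(\Lambda)(t)\cap\mathfrak h=\mathrm{LF}(x)(t)$ for all $t\in\mathbb R$. Then $1_i\in\mathrm{End}(\Lambda)(0)$ for every $i\in J$.
   Context: Let $k$ be a non-Archimedean local field with discrete valuation $\nu$ and residue characteristic different from $2$; for every finite-dimensional division algebra $\Delta$ over a finite extension of $k$, $\nu$ also denotes the extension of $\nu$ to $\Delta$, with valuation ring $o_\Delta$, maximal ideal $\mathfrak p_\Delta$, uniformizer $\pi_\Delta$. Let $D$ be a finite-dimensional central division $k$-algebra with continuous involution $\rho$, $k_0$ the elements of $k$ fixed by $\rho$, $V$ a finite-dimensional right $D$-space, $A=\mathrm{End}_D(V)$, $h$ a non-degenerate $\epsilon$-hermitian form on $V$ ($\epsilon=\pm1$; $h(vd_1,wd_2)=\rho(d_1)h(v,w)d_2$, $h(v,w)=\epsilon\rho(h(w,v))$) with adjoint involution $\sigma$, $\mathfrak g=\{a\in A:a+\sigma(a)=0\}$. An $o_\Delta$-lattice function on a finite-dimensional right $\Delta$-space $W$ is a map $\Lambda$ from $\mathbb R$ to full $o_\Delta$-lattices of $W$, with $\Lambda(r+\nu(\pi_\Delta))=\Lambda(r)\pi_\Delta$, decreasing, left continuous; $\mathrm{Latt}^1_{o_\Delta}(W)$ their set;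 $\mathrm{End}(\Lambda)(r)=\{a:a\Lambda(s)\subseteq\Lambda(s+r)\ \forall s\}$. For a signed hermitian form $h'$ on $W$: $M^\#=\{x:h'(x,M)\subseteq\mathfrak p_\Delta\}$, $\Lambda^\#(r)=(\bigcup_{s>-r}\Lambda(s))^\#$, $\mathrm{Latt}^1_{h'}(W)=\{\Lambda:\Lambda^\#=\Lambda\}$. Let $\beta\in\mathfrak g$ with $E=k[\beta]=\prod_{i\in J}E_i$ (fields), idempotents $1_i$, $V_i=1_iV$, $\mathrm{End}_D(V_i)=1_iA1_i$; $J_{un}=\{i:\sigma(1_i)=1_i\}$; $J_+$ contains one index from each pair $i\ne i'$ with $\sigma(1_i)=1_{i'}$. Fix central division $E_i$-algebras $\Delta_i$, right $\Delta_i$-spaces $W_i$, $E_i$-algebra isomorphisms $\varphi_i:\mathrm{End}_{\Delta_i}(W_i)\to\mathrm{End}_{E_i\otimes_kD}(V_i)$, and for $i\in J_{un}$ a signed hermitian form $h_i$ on $W_i$ (for an involution of $\Delta_i$) with adjoint involution $\varphi_i^{-1}\sigma\varphi_i$. $\mathcal B(H)=\prod_{i\in J_{un}}\mathrm{Latt}^1_{h_i}(W_i)\times\prod_{i\in J_+}\mathrm{Latt}^1_{o_{\Delta_i}}(W_i)$. $\mathfrak h=\{a\in\mathfrak g:a\beta=\beta a\}$, and for $x=(\Theta_i)$: $\mathrm{LF}(x)(t)=\sum_{i\in J_{un}}(\varphi_i(\mathrm{End}(\Theta_i)(t))\cap\mathfrak g)+\sum_{i\in J_+}\{a-\sigma(a):a\in\varphi_i(\mathrm{End}(\Theta_i)(t))\}$.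 *)

(* Defs.v *)
From HB Require Import structures.
From mathcomp Require Import all_boot all_order all_algebra all_field.
From mathcomp Require Import reals.
Set Implicit Arguments.
Unset Strict Implicit.
Unset Printing Implicit Defensive.
Import Order.TTheory GRing.Theory Num.Theory.
Local Open Scope ring_scope.

(* Valuations (real valued, only evaluated on nonzero elements).       *)

Definition is_valuation {R : realType} {T : nzRingType} (v : T -> R) : Prop :=
  (forall a b : T, a != 0 -> b != 0 -> a * b != 0 -> v (a * b) = v a + v b) /\
  (forall a b : T, a != 0 -> b != 0 -> a + b != 0 ->
     Num.min (v a) (v b) <= v (a + b)).

Definition in_o {R : realType} {T : nzRingType} (v : T -> R) (d : T) : Prop :=
  d = 0 \/ 0 <= v d.
Definition in_p {R : realType} {T : nzRingType} (v : T -> R) (d : T) : Prop :=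
  d = 0 \/ 0 < v d.

Definition is_uniformizer {R : realType} {T : nzRingType} (v : T -> R) (pi : T)
  : Prop :=
  pi != 0 /\ 0 < v pi /\ (forall d, d != 0 -> 0 < v d -> v pi <= v d).

Definition v_close {R : realType} {T : nzRingType} (v : T -> R) (a b : T) (M : R)
  : Prop := a = b \/ M <= v (a - b).

Definition discrete_normalized {R : realType} {k : fieldType} (nu : k -> R) :=
  (forall c : k, c != 0 -> exists z : int, nu c = z%:~R) /\
  (exists c : k, c != 0 /\ nu c = 1).

Definition v_complete {R : realType} {k : fieldType} (nu : k -> R) :=
  forall u : nat -> k,
    (forall M : R, exists N : nat, forall m n : nat,
        (N <= m)%N -> (N <= n)%N -> v_close nu (u m) (u n) M) ->
    exists l : k, forall M : R, exists N : nat, forall n : nat,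
        (N <= n)%N -> v_close nu (u n) l M.

Definition finite_residue_field {R : realType} {k : fieldType} (nu : k -> R) :=
  exists s : seq k, (forall b, b \in s -> in_o nu b) /\
    (forall a, in_o nu a -> exists2 b, b \in s & in_p nu (a - b)).

Definition nonarch_local_field {R : realType} {k : fieldType} (nu : k -> R) :=
  is_valuation nu /\ discrete_normalized nu /\ v_complete nu /\
  finite_residue_field nu.

Definition residue_char_not_2 {R : realType} {k : fieldType} (nu : k -> R) :=
  (2%:R : k) != 0 /\ nu 2%:R = 0.

Definition is_division {k : fieldType} (D : falgType k) :=
  forall d : D, d != 0 -> d \is a GRing.unit.

Definition central_division {k : fieldType} (D : falgType k) :=
  is_division D /\
  (forall z : D, (forall d : D, z * d = d * z) -> exists c : k, z = c%:A).

Definition valuation_extending {R : realType} {k : fieldType} (nu : k -> R)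
  (D : falgType k) (vD : D -> R) :=
  is_valuation vD /\ (forall c : k, c != 0 -> vD (c%:A) = nu c).

(* involution = additive anti-automorphism of order 2 (not nec. k-linear) *)
Definition is_involution {T : nzRingType} (rho : T -> T) :=
  (forall a b, rho (a + b) = rho a + rho b) /\
  (forall a b, rho (a * b) = rho b * rho a) /\
  rho 1 = 1 /\ (forall a, rho (rho a) = a).

Definition continuous_involution {R : realType} {T : nzRingType}
  (vD : T -> R) (rho : T -> T) :=
  is_involution rho /\
  (forall M : R, exists N : R, forall d : T, d != 0 -> N <= vD d ->
      rho d = 0 \/ M <= vD (rho d)).

Definition right_module {k : fieldType} {D : falgType k} {W : vectType k}
  (act : W -> D -> W) :=
  (forall v w d, act (v + w) d = act v d + act w d) /\
  (forall v d d', act v (d + d') = act v d + act v d') /\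
  (forall v d d', act v (d * d') = act (act v d) d') /\
  (forall v, act v 1 = v) /\
  (forall v (c : k), act v (c%:A) = c *: v).

Definition nondeg_eps_hermitian {k : fieldType} {D : falgType k} {W : vectType k}
  (act : W -> D -> W) (rho : D -> D) (eps : D) (h : W -> W -> D) :=
  (eps = 1 \/ eps = -1) /\
  (forall v v' w, h (v + v') w = h v w + h v' w) /\
  (forall v w w', h v (w + w') = h v w + h v w') /\
  (forall v w d1 d2, h (act v d1) (act w d2) = rho d1 * h v w * d2) /\
  (forall v w, h v w = eps * rho (h w v)) /\
  (forall v, (forall w, h v w = 0) -> v = 0).

(* f is D-linear (i.e. f in End_D(W)); elements of 'End(W) are k-linear *)
Definition D_linear {k : fieldType} {D : falgType k} {W : vectType k}
  (act : W -> D -> W) (f : 'End(W)) :=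
  forall w d, f (act w d) = act (f w) d.

Definition lpow {k : fieldType} {V : vectType k} (f : 'End(V)) (n : nat) : 'End(V) :=
  iter n (fun g => (f \o g)%VF) \1%VF.

Definition in_kpoly {k : fieldType} {V : vectType k} (beta a : 'End(V)) :=
  exists p : {poly k}, a = \sum_(i < size p) p`_i *: lpow beta i.

Definition separable_elt {k : fieldType} {V : vectType k} (beta : 'End(V)) :=
  exists p : {poly k}, p != 0 /\ separable_poly p /\
    \sum_(i < size p) p`_i *: lpow beta i = 0.

(* k[beta] = prod_{i in J} E_i with E_i = 1_i k[beta] fields; e i = 1_i *)
Definition field_decomposition {k : fieldType} {V : vectType k} {J : finType}
  (beta : 'End(V)) (e : J -> 'End(V)) :=
  (forall i, in_kpoly beta (e i)) /\
  (forall i, e i != 0) /\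
  (forall i, (e i \o e i)%VF = e i) /\
  (forall i j, i != j -> (e i \o e j)%VF = 0) /\
  (\sum_i e i = \1%VF) /\
  (forall i a, in_kpoly beta a -> (e i \o a)%VF != 0 ->
     exists2 b, in_kpoly beta b & (e i \o a \o b)%VF = e i).

Definition in_Ei {k : fieldType} {V : vectType k} (beta ei a : 'End(V)) :=
  exists2 b, in_kpoly beta b & a = (ei \o b)%VF.

Definition adjoint_inv {k : fieldType} {D : falgType k} {V : vectType k}
  (actV : V -> D -> V) (h : V -> V -> D) (sigma : 'End(V) -> 'End(V)) :=
  (forall a, D_linear actV a -> D_linear actV (sigma a)) /\
  (forall a, D_linear actV a -> forall v w, h (a v) w = h v (sigma a w)).

Definition in_g {k : fieldType} {D : falgType k} {V : vectType k}
  (actV : V -> D -> V) (sigma : 'End(V) -> 'End(V)) (a : 'End(V)) :=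
  D_linear actV a /\ a + sigma a = 0.

Definition in_frak_h {k : fieldType} {D : falgType k} {V : vectType k}
  (actV : V -> D -> V) (sigma : 'End(V) -> 'End(V)) (beta a : 'End(V)) :=
  in_g actV sigma a /\ (a \o beta)%VF = (beta \o a)%VF.

Definition in_Jun {k : fieldType} {V : vectType k} {J : finType}
  (sigma : 'End(V) -> 'End(V)) (e : J -> 'End(V)) (i : J) :=
  sigma (e i) = e i.

Definition Jplus_choice {k : fieldType} {V : vectType k} {J : finType}
  (sigma : 'End(V) -> 'End(V)) (e : J -> 'End(V)) (Jp : {set J}) :=
  (forall i, i \in Jp -> sigma (e i) != e i) /\
  (forall i i', i != i' -> sigma (e i) = e i' -> (i \in Jp) != (i' \in Jp)).

(* Delta is a central division E_i-algebra via io : E_i -> Delta *)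
Definition central_division_over {k : fieldType} {V : vectType k}
  (beta ei : 'End(V)) (Dl : falgType k) (io : 'End(V) -> Dl) :=
  is_division Dl /\
  (forall a b, in_Ei beta ei a -> in_Ei beta ei b -> io (a + b) = io a + io b) /\
  (forall a b, in_Ei beta ei a -> in_Ei beta ei b ->
     io (a \o b)%VF = io a * io b) /\
  (forall (c : k) a, in_Ei beta ei a -> io (c *: a) = c *: io a) /\
  io ei = 1 /\
  (forall a, in_Ei beta ei a -> io a = 0 -> a = 0) /\
  (forall z : Dl, (forall d, z * d = d * z) <-> exists2 a, in_Ei beta ei a & z = io a).

(* ph : End_{Delta}(W) -> End_{E_i (x) D}(V_i) is an E_i-algebra isomorphism,
   where End_{E_i (x) D}(V_i) = {b in A | b = 1_i b 1_i, b beta = beta b} *)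
Definition Ei_algebra_iso {k : fieldType} {D : falgType k} {V : vectType k}
  (actV : V -> D -> V) (beta ei : 'End(V))
  {Dl : falgType k} (io : 'End(V) -> Dl) {W : vectType k} (actW : W -> Dl -> W)
  (ph : 'End(W) -> 'End(V)) :=
  let target b := D_linear actV b /\ b = (ei \o b \o ei)%VF /\
                  (b \o beta)%VF = (beta \o b)%VF in
  (forall f, D_linear actW f -> target (ph f)) /\
  (forall b, target b -> exists2 f, D_linear actW f & ph f = b) /\
  (forall f g, D_linear actW f -> D_linear actW g -> ph f = ph g -> f = g) /\
  (forall f g, D_linear actW f -> D_linear actW g -> ph (f + g) = ph f + ph g) /\
  (forall f g, D_linear actW f -> D_linear actW g ->
     ph (f \o g)%VF = (ph f \o ph g)%VF) /\
  ph \1%VF = ei /\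
  (forall a f, in_Ei beta ei a -> D_linear actW f ->
     (forall w, f w = actW w (io a)) -> ph f = a).

(* adjoint involution of hW equals ph^-1 sigma ph *)
Definition adjoint_is_transported {k : fieldType} {V : vectType k}
  (sigma : 'End(V) -> 'End(V))
  {Dl : falgType k} {W : vectType k} (actW : W -> Dl -> W) (hW : W -> W -> Dl)
  (ph : 'End(W) -> 'End(V)) :=
  forall f g, D_linear actW f -> D_linear actW g -> ph g = sigma (ph f) ->
    forall w w', hW (f w) w' = hW w (g w').

Definition is_basis {k : fieldType} {Dl : falgType k} {W : vectType k}
  (act : W -> Dl -> W) (n : nat) (b : 'I_n -> W) :=
  (forall w, exists c : 'I_n -> Dl, w = \sum_(j < n) act (b j) (c j)) /\
  (forall c : 'I_n -> Dl, \sum_(j < n) act (b j) (c j) = 0 -> forall j, c j = 0).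

Definition full_lattice {R : realType} {k : fieldType} {Dl : falgType k}
  {W : vectType k} (vD : Dl -> R) (act : W -> Dl -> W) (M : W -> Prop) :=
  exists (n : nat) (b : 'I_n -> W), is_basis act b /\
    forall w, M w <-> exists c : 'I_n -> Dl,
        (forall j, in_o vD (c j)) /\ w = \sum_(j < n) act (b j) (c j).

Definition lattice_function {R : realType} {k : fieldType} {Dl : falgType k}
  {W : vectType k} (vD : Dl -> R) (act : W -> Dl -> W) (L : R -> W -> Prop) :=
  (forall r, full_lattice vD act (L r)) /\
  (forall pi, is_uniformizer vD pi ->
     forall r w, L (r + vD pi) w <-> exists2 u, L r u & w = act u pi) /\
  (forall r s, r <= s -> forall w, L s w -> L r w) /\
  (forall r w, (forall s, s < r -> L s w) -> L r w).

Definition dual_lattice {R : realType} {k : fieldType} {Dl : falgType k}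
  {W : vectType k} (vD : Dl -> R) (h : W -> W -> Dl) (M : W -> Prop) : W -> Prop :=
  fun x => forall y, M y -> in_p vD (h x y).

Definition dual_lf {R : realType} {k : fieldType} {Dl : falgType k}
  {W : vectType k} (vD : Dl -> R) (h : W -> W -> Dl) (L : R -> W -> Prop)
  : R -> W -> Prop :=
  fun r => dual_lattice vD h (fun y => exists2 s, - r < s & L s y).

Definition self_dual_lf {R : realType} {k : fieldType} {Dl : falgType k}
  {W : vectType k} (vD : Dl -> R) (act : W -> Dl -> W) (h : W -> W -> Dl)
  (L : R -> W -> Prop) :=
  lattice_function vD act L /\ (forall r w, dual_lf vD h L r w <-> L r w).

Definition End_lf {R : realType} {k : fieldType} {Dl : falgType k}
  {W : vectType k} (act : W -> Dl -> W) (L : R -> W -> Prop) (t : R)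
  (f : 'End(W)) :=
  D_linear act f /\ (forall s w, L s w -> L (s + t) (f w)).

(* x in B(H) (components outside J_un and J_+ are irrelevant) *)
Definition in_BH {R : realType} {k : fieldType} {V : vectType k} {J : finType}
  (sigma : 'End(V) -> 'End(V)) (e : J -> 'End(V)) (Jp : {set J})
  (Dl : J -> falgType k) (vDl : forall i, Dl i -> R)
  (W : J -> vectType k) (actW : forall i, W i -> Dl i -> W i)
  (hW : forall i, W i -> W i -> Dl i) (x : forall i, R -> W i -> Prop) :=
  forall i,
    (in_Jun sigma e i -> self_dual_lf (vDl i) (actW i) (hW i) (x i)) /\
    (i \in Jp -> lattice_function (vDl i) (actW i) (x i)).

Definition LF {R : realType} {k : fieldType} {D : falgType k} {V : vectType k}
  {J : finType} (actV : V -> D -> V)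
  (sigma : 'End(V) -> 'End(V)) (e : J -> 'End(V)) (Jp : {set J})
  (Dl : J -> falgType k) (W : J -> vectType k)
  (actW : forall i, W i -> Dl i -> W i)
  (phi : forall i, 'End(W i) -> 'End(V))
  (x : forall i, R -> W i -> Prop) (t : R) (a : 'End(V)) :=
  exists y : J -> 'End(V), a = \sum_i y i /\ forall i,
    (in_Jun sigma e i ->
       (exists2 f, End_lf (actW i) (x i) t f & y i = phi i f) /\
       in_g actV sigma (y i)) /\
    (i \in Jp ->
       exists2 f, End_lf (actW i) (x i) t f & y i = phi i f - sigma (phi i f)) /\
    (~ in_Jun sigma e i -> i \notin Jp -> y i = 0).

Definition excluded_case {k : fieldType} {D : falgType k} {V : vectType k}
  (rho : D -> D) (eps : D) (h : V -> V -> D) :=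
  (\dim (fullv : {vspace D}) = 1)%N /\ (forall d, rho d = d) /\ eps = 1 /\
  (\dim (fullv : {vspace V}) = 2)%N /\ (exists v : V, v != 0 /\ h v v = 0).

(* Main.v *)
Require Import Defs.
From HB Require Import structures.
From mathcomp Require Import all_boot all_order all_algebra all_field.
From mathcomp Require Import reals.
From mathcomp Require Import lra.
From Stdlib Require Import Classical.
Import Order.TTheory GRing.Theory Num.Theory.
Local Open Scope ring_scope.


Lemma val1 {R : realType} {T : nzRingType} (v : T -> R) :
  is_valuation v -> v 1 = 0.
Proof.
case=> Hm _; have := Hm 1 1 (oner_neq0 _) (oner_neq0 _).
rewrite mulr1 => /(_ (oner_neq0 _)) H.
lra.
Qed.

Lemma valN1 {R : realType} {T : nzRingType} (v : T -> R) :
  is_valuation v -> v (-1) = 0.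
Proof.
move=> Hv; have n1 : (-1 : T) != 0 by rewrite oppr_eq0 oner_neq0.
have := (proj1 Hv) (-1) (-1) n1 n1; rewrite mulrNN mulr1 => /(_ (oner_neq0 _)).
rewrite val1 // => H.
lra.
Qed.

Lemma valN {R : realType} {T : nzRingType} (v : T -> R) (x : T) :
  is_valuation v -> x != 0 -> v (- x) = v x.
Proof.
move=> Hv nx; have n1 : (-1 : T) != 0 by rewrite oppr_eq0 oner_neq0.
have := (proj1 Hv) (-1) x n1 nx; rewrite mulN1r oppr_eq0 => /(_ nx) ->.
by rewrite valN1 // add0r.
Qed.

Lemma in_oM {R : realType} {T : nzRingType} (v : T -> R) a b :
  is_valuation v -> in_o v a -> in_o v b -> in_o v (a * b).
Proof.
move=> Hv [->|Ha]; first by left; rewrite mul0r.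
move=> [->|Hb]; first by left; rewrite mulr0.
case: (eqVneq (a * b) 0) => [->|nab]; first by left.
have na : a != 0 by apply: contraNneq nab => ->; rewrite mul0r.
have nb : b != 0 by apply: contraNneq nab => ->; rewrite mulr0.
by right; rewrite (proj1 Hv) // addr_ge0.
Qed.

Lemma in_oD {R : realType} {T : nzRingType} (v : T -> R) a b :
  is_valuation v -> in_o v a -> in_o v b -> in_o v (a + b).
Proof.
move=> Hv [->|Ha]; first by rewrite add0r.
move=> [->|Hb]; first by rewrite addr0; right.
case: (eqVneq a 0) => [->|na]; first by rewrite add0r; right.
case: (eqVneq b 0) => [->|nb]; first by rewrite addr0; right.
case: (eqVneq (a + b) 0) => [->|nab]; first by left.
right; apply: le_trans ((proj2 Hv) a b na nb nab).
by rewrite le_min Ha Hb.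
Qed.

Lemma in_o0 {R : realType} {T : nzRingType} (v : T -> R) : in_o v 0.
Proof. by left. Qed.

Lemma in_o1 {R : realType} {T : nzRingType} (v : T -> R) :
  is_valuation v -> in_o v 1.
Proof. by move=> Hv; right; rewrite val1. Qed.

Lemma in_oN1 {R : realType} {T : nzRingType} (v : T -> R) :
  is_valuation v -> in_o v (-1).
Proof. by move=> Hv; right; rewrite valN1. Qed.


Lemma act0 {k : fieldType} {Dl : falgType k} {W : vectType k}
  (act : W -> Dl -> W) : right_module act -> forall v, act v 0 = 0.
Proof.
case=> _ [HD _] v; have := HD v 0 0; rewrite addr0.
move/(congr1 (fun x => x - act v 0)).
by rewrite subrr addrK.
Qed.

Lemma act0l {k : fieldType} {Dl : falgType k} {W : vectType k}
  (act : W -> Dl -> W) : right_module act -> forall d, act 0 d = 0.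
Proof.
case=> HD _ d; have := HD 0 0 d; rewrite addr0.
move/(congr1 (fun x => x - act 0 d)).
by rewrite subrr addrK.
Qed.

Lemma act_sum {k : fieldType} {Dl : falgType k} {W : vectType k}
  (act : W -> Dl -> W) : right_module act ->
  forall n (F : 'I_n -> W) d, act (\sum_(j < n) F j) d = \sum_(j < n) act (F j) d.
Proof.
move=> Hm n F d; elim/big_rec2: _ => [|j y1 y2 _ <-]; first exact: act0l.
by rewrite (proj1 Hm).
Qed.

Lemma actN {k : fieldType} {Dl : falgType k} {W : vectType k}
  (act : W -> Dl -> W) : right_module act -> forall v, act v (-1) = - v.
Proof.
move=> Hm v; apply/eqP; rewrite -addr_eq0.
have [_ [HD [_ [H1 _]]]] := Hm.
by rewrite -{2}(H1 v) -HD addNr act0.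
Qed.

Lemma full_lattice0 {R : realType} {k : fieldType} {Dl : falgType k}
  {W : vectType k} (vD : Dl -> R) (act : W -> Dl -> W) M :
  right_module act -> full_lattice vD act M -> M 0.
Proof.
move=> Hm [n [b [_ HM]]]; apply/HM; exists (fun _ => 0); split=> [j|]; first by left.
by rewrite big1 // => j _; rewrite act0.
Qed.

Lemma full_latticeD {R : realType} {k : fieldType} {Dl : falgType k}
  {W : vectType k} (vD : Dl -> R) (act : W -> Dl -> W) M :
  is_valuation vD -> right_module act -> full_lattice vD act M ->
  forall w w', M w -> M w' -> M (w + w').
Proof.
move=> Hv Hm [n [b [_ HM]]] w w' /HM [c [Hc ->]] /HM [c' [Hc' ->]].
apply/HM; exists (fun j => c j + c' j); split=> [j|]; first exact: in_oD.
by rewrite -big_split; apply: eq_bigr => j _; rewrite (proj1 (proj2 Hm)).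
Qed.

Lemma full_latticeA {R : realType} {k : fieldType} {Dl : falgType k}
  {W : vectType k} (vD : Dl -> R) (act : W -> Dl -> W) M :
  is_valuation vD -> right_module act -> full_lattice vD act M ->
  forall w d, in_o vD d -> M w -> M (act w d).
Proof.
move=> Hv Hm [n [b [_ HM]]] w d Hd /HM [c [Hc ->]].
apply/HM; exists (fun j => c j * d); split=> [j|]; first exact: in_oM.
rewrite act_sum //; apply: eq_bigr => j _.
by rewrite (proj1 (proj2 (proj2 Hm))).
Qed.


Lemma scal_central {k : fieldType} {Dl : falgType k} (c : k) (d : Dl) :
  c%:A * d = d * c%:A.
Proof. by rewrite -scalerAl mul1r -scalerAr mulr1. Qed.

Lemma act_scal {k : fieldType} {Dl : falgType k} {W : vectType k}
  (act : W -> Dl -> W) : right_module act ->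
  forall v d (c : k), act (c *: v) d = c *: act v d.
Proof.
move=> Hm v d c; have [_ [_ [HM [_ HS]]]] := Hm.
by rewrite -!HS -!HM scal_central.
Qed.

Lemma Dlin_comp {k : fieldType} {Dl : falgType k} {W : vectType k}
  (act : W -> Dl -> W) f g : D_linear act f -> D_linear act g ->
  D_linear act (f \o g)%VF.
Proof. by move=> Hf Hg w d; rewrite !comp_lfunE Hg Hf. Qed.

Lemma Dlin_id {k : fieldType} {Dl : falgType k} {W : vectType k}
  (act : W -> Dl -> W) : D_linear act \1%VF.
Proof. by move=> w d; rewrite !id_lfunE. Qed.

Lemma Dlin_0 {k : fieldType} {Dl : falgType k} {W : vectType k}
  (act : W -> Dl -> W) : right_module act -> D_linear act 0.
Proof. by move=> Hm w d; rewrite !lfunE /= act0l. Qed.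

Lemma Dlin_add {k : fieldType} {Dl : falgType k} {W : vectType k}
  (act : W -> Dl -> W) f g : right_module act -> D_linear act f -> D_linear act g ->
  D_linear act (f + g).
Proof. by move=> Hm Hf Hg w d; rewrite !lfunE /= Hf Hg (proj1 Hm). Qed.

Lemma Dlin_scale {k : fieldType} {Dl : falgType k} {W : vectType k}
  (act : W -> Dl -> W) (c : k) f : right_module act -> D_linear act f ->
  D_linear act (c *: f).
Proof. by move=> Hm Hf w d; rewrite !lfunE /= Hf act_scal. Qed.

Lemma Dlin_opp {k : fieldType} {Dl : falgType k} {W : vectType k}
  (act : W -> Dl -> W) f : right_module act -> D_linear act f ->
  D_linear act (- f).
Proof. by move=> Hm Hf; rewrite -scaleN1r; apply: Dlin_scale. Qed.

Lemma Dlin_sub {k : fieldType} {Dl : falgType k} {W : vectType k}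
  (act : W -> Dl -> W) f g : right_module act -> D_linear act f -> D_linear act g ->
  D_linear act (f - g).
Proof. by move=> Hm Hf Hg; apply: Dlin_add => //; apply: Dlin_opp. Qed.

Lemma Dlin_sum {k : fieldType} {Dl : falgType k} {W : vectType k} {I : finType}
  (act : W -> Dl -> W) (F : I -> 'End(W)) : right_module act ->
  (forall i, D_linear act (F i)) -> D_linear act (\sum_i F i).
Proof.
move=> Hm HF; elim/big_rec: _ => [|i x _ Hx]; first exact: Dlin_0.
exact: Dlin_add.
Qed.

Lemma End_comp {R : realType} {k : fieldType} {Dl : falgType k}
  {W : vectType k} (act : W -> Dl -> W) (L : R -> W -> Prop) t t' f g :
  End_lf act L t f -> End_lf act L t' g -> End_lf act L (t + t') (f \o g)%VF.
Proof.
move=> [Hf Lf] [Hg Lg]; split; first exact: Dlin_comp.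
move=> s w Lw; rewrite comp_lfunE.
have := Lf _ _ (Lg _ _ Lw); congr L; lra.
Qed.

Lemma End_id {R : realType} {k : fieldType} {Dl : falgType k}
  {W : vectType k} (act : W -> Dl -> W) (L : R -> W -> Prop) :
  End_lf act L 0 \1%VF.
Proof. by split; [exact: Dlin_id|move=> s w; rewrite addr0 id_lfunE]. Qed.

Lemma End_0 {R : realType} {k : fieldType} {Dl : falgType k}
  {W : vectType k} (vD : Dl -> R) (act : W -> Dl -> W) (L : R -> W -> Prop) t :
  right_module act -> lattice_function vD act L -> End_lf act L t 0.
Proof.
move=> Hm [HL _]; split; first exact: Dlin_0.
by move=> s w _; rewrite lfunE /=; apply: (full_lattice0 _ _ _ Hm (HL _)).
Qed.

Lemma End_add {R : realType} {k : fieldType} {Dl : falgType k}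
  {W : vectType k} (vD : Dl -> R) (act : W -> Dl -> W) (L : R -> W -> Prop) t f g :
  is_valuation vD -> right_module act -> lattice_function vD act L ->
  End_lf act L t f -> End_lf act L t g -> End_lf act L t (f + g).
Proof.
move=> Hv Hm [HL _] [Hf Lf] [Hg Lg]; split; first exact: Dlin_add.
move=> s w Lw; rewrite lfunE /=; apply: (full_latticeD _ _ _ Hv Hm (HL _)); auto.
Qed.

Lemma End_scale {R : realType} {k : fieldType} {Dl : falgType k}
  {W : vectType k} (vD : Dl -> R) (act : W -> Dl -> W) (L : R -> W -> Prop) t
  (c : k) f :
  is_valuation vD -> right_module act -> lattice_function vD act L ->
  in_o vD (c%:A) -> End_lf act L t f -> End_lf act L t (c *: f).
Proof.
move=> Hv Hm [HL _] Hc [Hf Lf]; split; first exact: Dlin_scale.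
move=> s w Lw; rewrite lfunE /=.
have [_ [_ [_ [_ HS]]]] := Hm; rewrite -HS.
by apply: (full_latticeA _ _ _ Hv Hm (HL _)); auto.
Qed.

Lemma End_opp {R : realType} {k : fieldType} {Dl : falgType k}
  {W : vectType k} (vD : Dl -> R) (act : W -> Dl -> W) (L : R -> W -> Prop) t f :
  is_valuation vD -> right_module act -> lattice_function vD act L ->
  End_lf act L t f -> End_lf act L t (- f).
Proof.
move=> Hv Hm HL Hf; rewrite -scaleN1r; apply: (@End_scale _ _ _ _ vD) => //.
by rewrite scaleN1r; apply: in_oN1.
Qed.

Lemma End_sub {R : realType} {k : fieldType} {Dl : falgType k}
  {W : vectType k} (vD : Dl -> R) (act : W -> Dl -> W) (L : R -> W -> Prop) t f g :
  is_valuation vD -> right_module act -> lattice_function vD act L ->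
  End_lf act L t f -> End_lf act L t g -> End_lf act L t (f - g).
Proof.
by move=> Hv Hm HL Hf Hg; apply: (@End_add _ _ _ _ vD) => //; apply: (@End_opp _ _ _ _ vD).
Qed.

Lemma End_sum {R : realType} {k : fieldType} {Dl : falgType k} {I : finType}
  {W : vectType k} (vD : Dl -> R) (act : W -> Dl -> W) (L : R -> W -> Prop) t
  (P : pred I) (F : I -> 'End(W)) :
  is_valuation vD -> right_module act -> lattice_function vD act L ->
  (forall i, P i -> End_lf act L t (F i)) -> End_lf act L t (\sum_(i | P i) F i).
Proof.
move=> Hv Hm HL HF; elim/big_rec: _ => [|i x Pi Hx]; first exact: (@End_0 _ _ _ _ vD _ _ _ Hm HL).
apply: (@End_add _ _ _ _ vD) => //; exact: HF.
Qed.

Lemma End_mono {R : realType} {k : fieldType} {Dl : falgType k}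
  {W : vectType k} (vD : Dl -> R) (act : W -> Dl -> W) (L : R -> W -> Prop) t t' f :
  lattice_function vD act L -> t' <= t -> End_lf act L t f -> End_lf act L t' f.
Proof.
move=> [_ [_ [Hdec _]]] le [Hf Lf]; split => // s w Lw.
apply: Hdec (Lf _ _ Lw); lra.
Qed.


Lemma h0l {k : fieldType} {D : falgType k} {V : vectType k}
  {actV : V -> D -> V} {rho eps h} :
  nondeg_eps_hermitian actV rho eps h -> forall w, h 0 w = 0.
Proof.
move=> [_ [HA _]] w; have := HA 0 0 w; rewrite addr0.
by move/(congr1 (fun x => x - h 0 w)); rewrite subrr addrK.
Qed.

Lemma h0r {k : fieldType} {D : falgType k} {V : vectType k}
  {actV : V -> D -> V} {rho eps h} :
  nondeg_eps_hermitian actV rho eps h -> forall v, h v 0 = 0.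
Proof.
move=> [_ [_ [HA _]]] v; have := HA v 0 0; rewrite addr0.
by move/(congr1 (fun x => x - h v 0)); rewrite subrr addrK.
Qed.

Lemma hNr {k : fieldType} {D : falgType k} {V : vectType k}
  {actV : V -> D -> V} {rho eps h} :
  nondeg_eps_hermitian actV rho eps h -> forall v w, h v (- w) = - h v w.
Proof.
move=> Hh v w; apply/eqP; rewrite -addr_eq0.
have [_ [_ [HA _]]] := Hh; by rewrite -HA addNr (h0r Hh).
Qed.

Lemma rho0 {T : nzRingType} (rho : T -> T) : is_involution rho -> rho 0 = 0.
Proof.
move=> [HA _]; have := HA 0 0; rewrite addr0.
by move/(congr1 (fun x => x - rho 0)); rewrite subrr addrK.
Qed.

Lemma sig_uniq {k : fieldType} {D : falgType k} {V : vectType k}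
  {actV : V -> D -> V} {rho eps h} {c c' : 'End(V)} :
  is_involution rho -> nondeg_eps_hermitian actV rho eps h ->
  (forall v w, h v (c w) = h v (c' w)) -> c = c'.
Proof.
move=> Hr Hh Hc; apply/lfunP => w; apply/eqP; rewrite -subr_eq0; apply/eqP.
have [_ [_ [HA [_ [Hs Hn]]]]] := Hh.
apply: Hn => v; rewrite Hs.
by rewrite HA (hNr Hh) Hc subrr rho0 // mulr0.
Qed.

Lemma h_adj_sym {k : fieldType} {D : falgType k} {V : vectType k}
  {actV : V -> D -> V} {rho eps h sigma a} :
  is_involution rho -> nondeg_eps_hermitian actV rho eps h ->
  adjoint_inv actV h sigma -> D_linear actV a ->
  forall v w, h (sigma a v) w = h v (a w).
Proof.
move=> Hr Hh [Hl Ha] Da v w.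
have [_ [_ [_ [_ [Hs _]]]]] := Hh.
by rewrite [LHS]Hs -Ha // [RHS]Hs.
Qed.


Lemma sig0 {k : fieldType} {D : falgType k} {V : vectType k}
  {actV : V -> D -> V} {rho eps h sigma} :
  right_module actV -> is_involution rho -> nondeg_eps_hermitian actV rho eps h ->
  adjoint_inv actV h sigma -> sigma 0 = 0.
Proof.
move=> Hm Hr Hh [Hl Ha]; apply: (sig_uniq Hr Hh) => v w.
rewrite -Ha; last exact: (Dlin_0 _ Hm).
by rewrite !lfunE /= (h0l Hh) (h0r Hh).
Qed.

Lemma sig_comp {k : fieldType} {D : falgType k} {V : vectType k}
  {actV : V -> D -> V} {rho eps h sigma a b} :
  is_involution rho -> nondeg_eps_hermitian actV rho eps h ->
  adjoint_inv actV h sigma -> D_linear actV a -> D_linear actV b ->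
  sigma (a \o b)%VF = (sigma b \o sigma a)%VF.
Proof.
move=> Hr Hh [Hl Ha] Da Db; apply: (sig_uniq Hr Hh) => v w.
rewrite -Ha; last exact: Dlin_comp.
by rewrite !comp_lfunE Ha // Ha.
Qed.

Lemma sig_add {k : fieldType} {D : falgType k} {V : vectType k}
  {actV : V -> D -> V} {rho eps h sigma a b} :
  right_module actV -> is_involution rho -> nondeg_eps_hermitian actV rho eps h ->
  adjoint_inv actV h sigma -> D_linear actV a -> D_linear actV b ->
  sigma (a + b) = sigma a + sigma b.
Proof.
move=> Hm Hr Hh [Hl Ha] Da Db; apply: (sig_uniq Hr Hh) => v w.
rewrite -Ha; last exact: Dlin_add.
have [_ [HA [HB _]]] := Hh.
by rewrite !lfunE /= HA HB !Ha.
Qed.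

Lemma sig_opp {k : fieldType} {D : falgType k} {V : vectType k}
  {actV : V -> D -> V} {rho eps h sigma a} :
  right_module actV -> is_involution rho -> nondeg_eps_hermitian actV rho eps h ->
  adjoint_inv actV h sigma -> D_linear actV a ->
  sigma (- a) = - sigma a.
Proof.
move=> Hm Hr Hh Hs Da; apply/eqP; rewrite -addr_eq0.
rewrite -(sig_add Hm Hr Hh Hs) ?addNr ?(sig0 Hm Hr Hh Hs) //.
exact: Dlin_opp.
Qed.

Lemma sig_inv {k : fieldType} {D : falgType k} {V : vectType k}
  {actV : V -> D -> V} {rho eps h sigma a} :
  is_involution rho -> nondeg_eps_hermitian actV rho eps h ->
  adjoint_inv actV h sigma -> D_linear actV a ->
  sigma (sigma a) = a.
Proof.
move=> Hr Hh Hs Da; apply: (sig_uniq Hr Hh) => v w.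
have [Hl Ha] := Hs.
rewrite -(Ha (sigma a)); last exact: Hl.
exact: (h_adj_sym Hr Hh Hs).
Qed.

Lemma sig_id {k : fieldType} {D : falgType k} {V : vectType k}
  {actV : V -> D -> V} {rho eps h sigma} :
  is_involution rho -> nondeg_eps_hermitian actV rho eps h ->
  adjoint_inv actV h sigma -> sigma \1%VF = \1%VF.
Proof.
move=> Hr Hh [Hl Ha]; apply: (sig_uniq Hr Hh) => v w.
by rewrite -Ha ?id_lfunE //; apply: Dlin_id.
Qed.

Lemma sig_scale {k : fieldType} {D : falgType k} {V : vectType k}
  {actV : V -> D -> V} {rho eps h sigma} (c : k) :
  right_module actV -> central_division D ->
  is_involution rho -> nondeg_eps_hermitian actV rho eps h ->
  adjoint_inv actV h sigma ->
  exists c' : k, forall a, D_linear actV a -> sigma (c *: a) = c' *: sigma a.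
Proof.
move=> Hm [_ HC] Hr Hh [Hl Ha].
have [HrA [HrM [Hr1 Hrr]]] := Hr.
have : exists c' : k, rho (c%:A) = c'%:A.
  by apply: HC => d; rewrite -{1}(Hrr d) -HrM -scal_central HrM Hrr.
case=> c' Hc'; exists c' => a Da.
apply: (sig_uniq Hr Hh) => v w.
have [_ [_ [_ [Hsq _]]]] := Hh.
have [_ [_ [_ [H1 HS]]]] := Hm.
rewrite -Ha; last exact: Dlin_scale.
rewrite !lfunE /= -!HS.
have E1 : h (actV (a v) c%:A) w = rho c%:A * h (a v) w.
  by rewrite -[in LHS](H1 w) Hsq mulr1.
have E2 : h v (actV (sigma a w) c'%:A) = h v (sigma a w) * c'%:A.
  by rewrite -[in LHS](H1 v) Hsq Hr1 mul1r.
by rewrite E1 E2 Ha // Hc' scal_central.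
Qed.


Definition peval {k : fieldType} {V : vectType k} (beta : 'End(V)) (p : {poly k}) :=
  \sum_(i < size p) p`_i *: lpow beta i.

Lemma lpowS {k : fieldType} {V : vectType k} (beta : 'End(V)) m :
  lpow beta m.+1 = (beta \o lpow beta m)%VF.
Proof. by []. Qed.

Lemma lpow0 {k : fieldType} {V : vectType k} (beta : 'End(V)) :
  lpow beta 0 = \1%VF.
Proof. by []. Qed.

Lemma lpow_comm {k : fieldType} {V : vectType k} (beta b : 'End(V)) m :
  (b \o beta)%VF = (beta \o b)%VF ->
  (b \o lpow beta m)%VF = (lpow beta m \o b)%VF.
Proof.
move=> Hb; elim: m => [|m IH]; first by rewrite lpow0 comp_lfun1l comp_lfun1r.
by rewrite lpowS comp_lfunA Hb -comp_lfunA IH comp_lfunA.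
Qed.

Lemma comp_sumr {k : fieldType} {V : vectType k} {I : finType} (b : 'End(V))
  (F : I -> 'End(V)) : (b \o \sum_i F i)%VF = \sum_i (b \o F i)%VF.
Proof.
elim/big_rec2: _ => [|i y1 y2 _ <-]; first by rewrite comp_lfun0r.
by rewrite comp_lfunDr.
Qed.

Lemma comp_suml {k : fieldType} {V : vectType k} {I : finType} (b : 'End(V))
  (F : I -> 'End(V)) : ((\sum_i F i) \o b)%VF = \sum_i (F i \o b)%VF.
Proof.
elim/big_rec2: _ => [|i y1 y2 _ <-]; first by rewrite comp_lfun0l.
by rewrite comp_lfunDl.
Qed.

Lemma peval_comm {k : fieldType} {V : vectType k} (beta b : 'End(V)) (p : {poly k}) :
  (b \o beta)%VF = (beta \o b)%VF ->
  (b \o peval beta p)%VF = (peval beta p \o b)%VF.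
Proof.
move=> Hb; rewrite /peval comp_sumr comp_suml; apply: eq_bigr => i _.
by rewrite -comp_lfunZr -comp_lfunZl lpow_comm.
Qed.

Lemma kpoly_commb {k : fieldType} {V : vectType k} (beta a : 'End(V)) :
  in_kpoly beta a -> (a \o beta)%VF = (beta \o a)%VF.
Proof.
by case=> p ->; apply/esym; apply: (@peval_comm _ _ beta beta p).
Qed.

Lemma kpoly_comm {k : fieldType} {V : vectType k} (beta a b : 'End(V)) :
  in_kpoly beta a -> in_kpoly beta b -> (a \o b)%VF = (b \o a)%VF.
Proof.
move=> Ha [p ->]; apply: peval_comm; exact: kpoly_commb.
Qed.

Lemma peval_widen {k : fieldType} {V : vectType k} (beta : 'End(V)) (p : {poly k}) n :
  (size p <= n)%N -> peval beta p = \sum_(i < n) p`_i *: lpow beta i.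
Proof.
move=> le; rewrite /peval (big_ord_widen n (fun i => p`_i *: lpow beta i) le).
rewrite [RHS](bigID (fun i : 'I_n => (i < size p)%N)) /=.
rewrite [X in _ = _ + X]big1 ?addr0 // => i; rewrite -leqNgt => H.
by rewrite nth_default // scale0r.
Qed.

Lemma kpoly_add {k : fieldType} {V : vectType k} (beta a b : 'End(V)) :
  in_kpoly beta a -> in_kpoly beta b -> in_kpoly beta (a + b).
Proof.
move=> [p ->] [q ->]; exists (p + q).
change (peval beta p + peval beta q = peval beta (p + q)).
set n := maxn (size p) (size q).
rewrite !(@peval_widen _ _ beta _ n) ?leq_maxl ?leq_maxr //; last first.
  by apply: leq_trans (size_polyD _ _) _.
by rewrite -big_split; apply: eq_bigr => i _; rewrite coefD scalerDl.
Qed.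

Lemma kpoly_scale {k : fieldType} {V : vectType k} (beta a : 'End(V)) (c : k) :
  in_kpoly beta a -> in_kpoly beta (c *: a).
Proof.
move=> [p ->]; exists (c *: p).
change (c *: peval beta p = peval beta (c *: p)).
rewrite (@peval_widen _ _ beta (c *: p) (size p)) ?size_scale_leq //.
by rewrite scaler_sumr; apply: eq_bigr => i _; rewrite coefZ scalerA.
Qed.

Lemma kpoly_0 {k : fieldType} {V : vectType k} (beta : 'End(V)) :
  in_kpoly beta 0.
Proof. by exists 0; rewrite size_poly0 big_ord0. Qed.

Lemma kpoly_lpow {k : fieldType} {V : vectType k} (beta : 'End(V)) m :
  in_kpoly beta (lpow beta m).
Proof.
exists 'X^m; rewrite size_polyXn big_ord_recr /= coefXn eqxx scale1r.
by rewrite big1 ?add0r // => i _; rewrite coefXn ltn_eqF // scale0r.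
Qed.

Lemma kpoly_sum {k : fieldType} {V : vectType k} {I : finType} (beta : 'End(V))
  (F : I -> 'End(V)) : (forall i, in_kpoly beta (F i)) -> in_kpoly beta (\sum_i F i).
Proof.
move=> HF; elim/big_rec: _ => [|i x _ Hx]; first exact: kpoly_0.
exact: kpoly_add.
Qed.

Lemma kpoly_beta {k : fieldType} {V : vectType k} (beta : 'End(V)) :
  in_kpoly beta beta.
Proof. by have := kpoly_lpow beta 1; rewrite lpowS lpow0 comp_lfun1r. Qed.

Lemma kpoly_comp {k : fieldType} {V : vectType k} (beta a b : 'End(V)) :
  in_kpoly beta a -> in_kpoly beta b -> in_kpoly beta (a \o b)%VF.
Proof.
move=> Ha [q ->]; rewrite /peval comp_sumr; apply: kpoly_sum => i.
rewrite -comp_lfunZr; apply: kpoly_scale.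
case: Ha => p ->; rewrite /peval comp_suml; apply: kpoly_sum => j.
rewrite -comp_lfunZl; apply: kpoly_scale.
suff -> : (lpow beta j \o lpow beta i)%VF = lpow beta (j + i) by exact: kpoly_lpow.
elim: (nat_of_ord j) => [|m IH]; first by rewrite lpow0 comp_lfun1l.
by rewrite addSn !lpowS -comp_lfunA IH.
Qed.

Lemma lpow_Dlin {k : fieldType} {D : falgType k} {V : vectType k}
  (actV : V -> D -> V) (beta : 'End(V)) m :
  D_linear actV beta -> D_linear actV (lpow beta m).
Proof.
move=> Hb; elim: m => [|m IH]; first exact: Dlin_id.
by rewrite lpowS; apply: Dlin_comp.
Qed.

Lemma kpoly_Dlin {k : fieldType} {D : falgType k} {V : vectType k}
  (actV : V -> D -> V) (beta a : 'End(V)) :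
  right_module actV -> D_linear actV beta -> in_kpoly beta a -> D_linear actV a.
Proof.
move=> Hm Hb [p ->]; apply: Dlin_sum => // i; apply: Dlin_scale => //.
exact: lpow_Dlin.
Qed.

Lemma comp_peval_killed {k : fieldType} {V : vectType k} (beta e : 'End(V)) (p : {poly k}) :
  (e \o beta)%VF = 0 -> (e \o peval beta p)%VF = p`_0 *: e.
Proof.
move=> He; rewrite /peval comp_sumr.
case: (posnP (size p)) => [/eqP|pos].
  by rewrite size_poly_eq0 => /eqP ->; rewrite size_poly0 big_ord0 coef0 scale0r.
rewrite -(prednK pos) big_ord_recl /= -comp_lfunZr comp_lfun1r big1 ?addr0 //.
by move=> i _; rewrite -comp_lfunZr comp_lfunA He comp_lfun0l scaler0.
Qed.


Lemma sig_sum {k : fieldType} {D : falgType k} {V : vectType k} {I : finType}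
  {actV : V -> D -> V} {rho eps h sigma} (F : I -> 'End(V)) :
  right_module actV -> is_involution rho -> nondeg_eps_hermitian actV rho eps h ->
  adjoint_inv actV h sigma -> (forall i, D_linear actV (F i)) ->
  sigma (\sum_i F i) = \sum_i sigma (F i).
Proof.
move=> Hm Hr Hh Hs HF.
suff : D_linear actV (\sum_i F i) /\ sigma (\sum_i F i) = \sum_i sigma (F i) by case.
apply: (big_ind2 (fun a b => D_linear actV a /\ sigma a = b)).
- by split; [exact: Dlin_0 | exact: (sig0 Hm Hr Hh Hs)].
- move=> x1 x2 y1 y2 [Dx <-] [Dy <-]; split; first exact: Dlin_add.
  exact: (sig_add Hm Hr Hh Hs).
- by move=> i _; split.
Qed.

Lemma sig_kpoly {k : fieldType} {D : falgType k} {V : vectType k}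
  {actV : V -> D -> V} {rho eps h sigma} (beta a : 'End(V)) :
  right_module actV -> central_division D ->
  is_involution rho -> nondeg_eps_hermitian actV rho eps h ->
  adjoint_inv actV h sigma -> D_linear actV beta -> sigma beta = - beta ->
  in_kpoly beta a -> in_kpoly beta (sigma a).
Proof.
move=> Hm HD Hr Hh Hs Db Sb [p ->].
have Dl m : D_linear actV (lpow beta m) by apply: lpow_Dlin.
rewrite (sig_sum _ Hm Hr Hh Hs); last by move=> i; apply: Dlin_scale.
apply: kpoly_sum => i.
have [c' Hc'] := sig_scale (p`_i) Hm HD Hr Hh Hs.
rewrite Hc' //; apply: kpoly_scale.
elim: (nat_of_ord i) => [|m IH].
  by rewrite lpow0 (sig_id Hr Hh Hs) -(lpow0 beta); apply: kpoly_lpow.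
rewrite lpowS (sig_comp Hr Hh Hs) // Sb; apply: kpoly_comp => //.
by rewrite -scaleN1r; apply: kpoly_scale; apply: kpoly_beta.
Qed.

Lemma idem_field {k : fieldType} {V : vectType k} {J : finType}
  (beta : 'End(V)) (e : J -> 'End(V)) i f :
  field_decomposition beta e -> in_kpoly beta f -> (f \o f)%VF = f ->
  (e i \o f)%VF = 0 \/ (e i \o f)%VF = e i.
Proof.
move=> He Kf Ff; have [Ke [_ [Ei [_ [_ Hinv]]]]] := He.
case: (eqVneq (e i \o f)%VF 0) => [|nz]; first by left.
right; have [b Kb Hb] := Hinv i f Kf nz.
set g := (e i \o f)%VF in nz Hb *.
have gg : (g \o g)%VF = g.
  rewrite /g comp_lfunA -(comp_lfunA (e i) f (e i)) (kpoly_comm _ _ _ Kf (Ke i)).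
  by rewrite comp_lfunA Ei -comp_lfunA Ff.
have ge : (g \o e i)%VF = g.
  by rewrite /g -comp_lfunA (kpoly_comm _ _ _ Kf (Ke i)) comp_lfunA Ei.
by rewrite -{1}ge -Hb comp_lfunA gg Hb.
Qed.


Lemma divM_neq0 {k : fieldType} {Dl : falgType k} (x y : Dl) :
  is_division Dl -> x != 0 -> y != 0 -> x * y != 0.
Proof.
move=> Hd nx ny; apply/eqP => H; have ux := Hd x nx.
have : y = x^-1 * (x * y) by rewrite mulKr.
by rewrite H mulr0 => /eqP; rewrite (negbTE ny).
Qed.

Lemma val_inv {R : realType} {k : fieldType} {Dl : falgType k} (vD : Dl -> R) (x : Dl) :
  is_valuation vD -> is_division Dl -> x != 0 -> vD x^-1 = - vD x.
Proof.
move=> Hv Hd nx; have ux := Hd x nx.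
have ni : x^-1 != 0 by rewrite invr_eq0.
have := (proj1 Hv) x x^-1 nx ni; rewrite mulrV // => /(_ (oner_neq0 _)).
rewrite val1 //; lra.
Qed.

Lemma exp_neq0 {k : fieldType} {Dl : falgType k} (x : Dl) n :
  is_division Dl -> x != 0 -> x ^+ n != 0.
Proof.
move=> Hd nx; elim: n => [|n IH]; first by rewrite expr0 oner_neq0.
by rewrite exprS divM_neq0.
Qed.

Lemma val_exp {R : realType} {k : fieldType} {Dl : falgType k} (vD : Dl -> R) (x : Dl) n :
  is_valuation vD -> is_division Dl -> x != 0 -> vD (x ^+ n) = n%:R * vD x.
Proof.
move=> Hv Hd nx; elim: n => [|n IH]; first by rewrite expr0 mul0r val1.
rewrite exprS (proj1 Hv) ?exp_neq0 ?divM_neq0 //.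
transitivity (vD x + n%:R * vD x); first by congr (_ + _); exact: IH.
  rewrite mulrSr; lra.
exact: exp_neq0.
Qed.

Lemma alg_neq0 {k : fieldType} {Dl : falgType k} (a : k) :
  a != 0 -> a%:A != 0 :> Dl.
Proof. by move=> na; rewrite scaler_eq0 negb_or na oner_neq0. Qed.

Lemma val_scal {R : realType} {k : fieldType} {Dl : falgType k} (nu : k -> R)
  (vD : Dl -> R) (a : k) (d : Dl) :
  valuation_extending nu vD -> is_division Dl -> a != 0 -> d != 0 ->
  vD (a *: d) = nu a + vD d.
Proof.
move=> [Hv He] Hd na nd; rewrite -mulr_algl (proj1 Hv) ?alg_neq0 ?divM_neq0 //.
  by rewrite He.
exact: alg_neq0.
Qed.

Lemma ultra_small {R : realType} {k : fieldType} {Dl : falgType k} (vD : Dl -> R)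
  (V : R) {I : finType} (P : pred I) (F : I -> Dl) :
  is_valuation vD -> (forall i, P i -> F i = 0 \/ V < vD (F i)) ->
  (\sum_(i | P i) F i) = 0 \/ V < vD (\sum_(i | P i) F i).
Proof.
move=> Hv HF; apply: (big_ind (fun x => x = 0 \/ V < vD x)) => //; first by left.
move=> x y [->|Hx]; first by rewrite add0r.
move=> [->|Hy]; first by rewrite addr0; right.
case: (eqVneq x 0) => [->|nx]; first by rewrite add0r; right.
case: (eqVneq y 0) => [->|ny]; first by rewrite addr0; right.
case: (eqVneq (x + y) 0) => [->|nxy]; first by left.
right; apply: lt_le_trans ((proj2 Hv) x y nx ny nxy).
by rewrite lt_min Hx Hy.
Qed.

Lemma two_equal {R : realType} {k : fieldType} {Dl : falgType k} (vD : Dl -> R)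
  {I : finType} (F : I -> Dl) :
  is_valuation vD -> \sum_i F i = 0 -> (exists i, F i != 0) ->
  exists i j, i != j /\ F i != 0 /\ F j != 0 /\ vD (F i) = vD (F j).
Proof.
move=> Hv Hs [i0 Hi0]; apply: NNPP => Hno.
have Hno' : forall i j, i != j -> F i != 0 -> F j != 0 -> vD (F i) != vD (F j).
  move=> i j ij ni nj; apply/eqP => E; apply: Hno; exists i, j; by [].
case: (@arg_minP _ _ _ i0 (fun i => F i != 0) (fun i => vD (F i)) Hi0).
move=> j0 Hj0 Hmin.
have small : forall j, j != j0 -> F j = 0 \/ vD (F j0) < vD (F j).
  move=> j nj; case: (eqVneq (F j) 0) => [|Fj]; first by left.
  right; rewrite lt_neqAle Hmin // andbT.
  by rewrite eq_sym; apply: Hno'; rewrite // eq_sym.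
move: Hs; rewrite (bigD1 j0) //=.
have [->|Hr] := ultra_small vD (vD (F j0)) (fun j => j != j0) F Hv small.
  by rewrite addr0 => /eqP; rewrite (negbTE Hj0).
move/eqP; rewrite addr_eq0 => /eqP E.
have nr : \sum_(i | i != j0) F i != 0.
  by apply: contraNneq Hj0 => H; rewrite E H oppr0.
move: Hr; rewrite E valN //; lra.
Qed.


Lemma frac_helper {R : realType} (v : R) (a b n : nat) (za zb : int) :
  (b < a)%N -> (a <= n)%N -> za%:~R + a%:R * v = zb%:~R + b%:R * v ->
  exists z : int, v * (n`!)%:R = z%:~R.
Proof.
move=> ba an E.
have Hm : v * (a - b)%:R = (zb - za)%:~R.
  rewrite natrB ?(ltnW ba) // intrD intrN; lra.
have /dvdnP [q Hq] : ((a - b) %| n`!)%N.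
  by apply: dvdn_fact; rewrite subn_gt0 ba /= (leq_trans (leq_subr _ _) an).
exists (q%:Z * (zb - za)); rewrite Hq natrM mulrA [v * _]mulrC -mulrA Hm intrM.
by rewrite pmulrn.
Qed.

Lemma disc_val {R : realType} {k : fieldType} {Dl : falgType k} (nu : k -> R)
  (vD : Dl -> R) :
  discrete_normalized nu -> valuation_extending nu vD -> is_division Dl ->
  forall d : Dl, d != 0 -> exists z : int, vD d * ((\dim {:Dl})`!)%:R = z%:~R.
Proof.
move=> [Hint _] Hext Hd d nd.
set n := \dim {:Dl}.
pose X := [tuple d ^+ i | i < n.+1].
have nf : ~~ free X.
  rewrite /free size_tuple; apply/negP => /eqP E.
  have := dimvS (subvf <<X>>%VS); rewrite E.
  by rewrite -/n ltnn.
have H : ~ (forall c : 'I_n.+1 -> k, \sum_(i < n.+1) c i *: X`_i = 0 ->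
            forall i, c i = 0).
  by move=> H; move/negP: nf; apply; apply/freeP.
have [c Hc] := not_all_ex_not _ _ H.
have [Hs Hc'] := imply_to_and _ _ Hc.
have [i0 Hi0] := not_all_ex_not _ _ Hc'.
have Xi : forall i : 'I_n.+1, X`_i = d ^+ i.
  by move=> i; rewrite -tnth_nth tnth_mktuple.
pose F (i : 'I_n.+1) := c i *: d ^+ i.
have HF : \sum_i F i = 0 by rewrite -[RHS]Hs; apply: eq_bigr => i _; rewrite Xi.
have Fi0 : F i0 != 0.
  by rewrite scaler_eq0 negb_or exp_neq0 // andbT; apply/eqP.
have [i [j [ij [Fi [Fj Eij]]]]] := two_equal vD F (proj1 Hext) HF (ex_intro _ i0 Fi0).
have ci : c i != 0 by apply: contraNneq Fi => E; rewrite /F E scale0r.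
have cj : c j != 0 by apply: contraNneq Fj => E; rewrite /F E scale0r.
move: Eij; rewrite /F !(val_scal nu vD) ?exp_neq0 // !(val_exp vD) //; try exact: (proj1 Hext).
have [zi ->] := Hint _ ci; have [zj ->] := Hint _ cj => E.
have ilt : (i <= n)%N by rewrite -ltnS ltn_ord.
have jlt : (j <= n)%N by rewrite -ltnS ltn_ord.
case: (ltngtP i j) => [lij|lji|eij].
- by apply: (frac_helper _ _ _ _ zj zi lij jlt); rewrite E.
- exact: (frac_helper _ _ _ _ zi zj lji ilt E).
- by move: ij; rewrite (val_inj eij) eqxx.
Qed.

Lemma nat_min (P : nat -> Prop) : (exists m, P m) ->
  exists m, P m /\ forall m', P m' -> (m <= m')%N.
Proof.
case=> m Pm; elim: m {-2}m (leqnn m) Pm => [|n IH] m le Pm.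
  by exists m; split => // m' _; move: le; rewrite leqn0 => /eqP ->.
case: (classic (exists m', P m' /\ (m' < m)%N)) => [[m' [Pm' lt]]|Hno].
  by apply: (IH m') => //; rewrite -ltnS (leq_trans lt le).
exists m; split => // m' Pm'; rewrite leqNgt; apply/negP => lt.
by apply: Hno; exists m'.
Qed.

Lemma unif_exists {R : realType} {k : fieldType} {Dl : falgType k} (nu : k -> R)
  (vD : Dl -> R) :
  discrete_normalized nu -> valuation_extending nu vD -> is_division Dl ->
  exists pi, is_uniformizer vD pi.
Proof.
move=> Hdn Hext Hd.
set N := ((\dim {:Dl})`!)%:R : R.
have N0 : 0 < N by rewrite /N ltr0n fact_gt0.
pose P m := (0 < m)%N /\ exists d : Dl, d != 0 /\ vD d * N = m%:R.
have [c [nc c1]] := proj2 Hdn.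
have : exists m, P m.
  exists ((\dim {:Dl})`!); split; first exact: fact_gt0.
  exists (c%:A); split; first exact: alg_neq0.
  by rewrite (proj2 Hext) // c1 mul1r.
case/nat_min => m0 [[m0pos [pi [npi Hpi]]] Hmin].
exists pi; split => //.
have vpos : 0 < vD pi.
  have : 0 < vD pi * N by rewrite Hpi ltr0n.
  by rewrite pmulr_lgt0.
split => // d nd dpos.
have [z Hz] := disc_val nu vD Hdn Hext Hd d nd.
have zpos : (0 < z)%R.
  by rewrite -(ltr0z R) -Hz; apply: mulr_gt0.
case: z zpos Hz => [m'|m'] zpos Hz; last by [].
have Pm' : P m'.
  split; first by rewrite -(ltz_nat 0) .
  by exists d; split => //; rewrite Hz.
have := Hmin _ Pm'; rewrite -(ler_nat R) -Hpi.
have -> : m'%:R = vD d * N by rewrite Hz.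
by rewrite ler_pM2r.
Qed.


Lemma expz_neq0 {k : fieldType} {Dl : falgType k} (x : Dl) (q : int) :
  is_division Dl -> x != 0 -> x ^ q != 0.
Proof.
move=> Hd nx; case: q => n /=; first exact: exp_neq0.
by rewrite invr_eq0; apply: exp_neq0.
Qed.

Lemma val_expz {R : realType} {k : fieldType} {Dl : falgType k} (vD : Dl -> R)
  (x : Dl) (q : int) :
  is_valuation vD -> is_division Dl -> x != 0 -> vD (x ^ q) = q%:~R * vD x.
Proof.
move=> Hv Hd nx; case: q => n.
  by rewrite (val_exp vD) //.
rewrite NegzE /= (val_inv vD) ?exp_neq0 // (val_exp vD) // mulNr.
by [].
Qed.

Lemma val_multiple {R : realType} {k : fieldType} {Dl : falgType k} (vD : Dl -> R)
  (pi d : Dl) :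
  is_valuation vD -> is_division Dl -> is_uniformizer vD pi -> d != 0 ->
  exists q : int, vD d = q%:~R * vD pi.
Proof.
move=> Hv Hd [npi [vpos Hmin]] nd.
set x := vD d / vD pi.
have hx : x * vD pi = vD d by rewrite /x divfK // gt_eqF.
exists (Num.floor x).
set q := Num.floor x.
have h1 : q%:~R <= x by apply: Num.Theory.floor_le.
have h2 : x < q%:~R + 1 by rewrite -[1]/(1%:~R) -intrD; apply: Num.Theory.floorD1_gt.
have h1' : q%:~R * vD pi <= vD d by rewrite -hx ler_pM2r.
have h2' : vD d < (q%:~R + 1) * vD pi by rewrite -hx ltr_pM2r.
set u := (pi ^ q)^-1 * d.
have npq : pi ^ q != 0 by apply: expz_neq0.
have nu : u != 0 by apply: divM_neq0 => //; rewrite invr_eq0.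
have vu : vD u = vD d - q%:~R * vD pi.
  rewrite /u (proj1 Hv) ?invr_eq0 // (val_inv vD) // (val_expz vD) //; lra.
case: (ltrP 0 (vD u)) => [upos|uneg].
  have := Hmin _ nu upos; lra.
lra.
Qed.

Lemma lf_pi_pos {R : realType} {k : fieldType} {Dl : falgType k} {W : vectType k}
  (vD : Dl -> R) (act : W -> Dl -> W) (L : R -> W -> Prop) (pi : Dl) :
  right_module act -> lattice_function vD act L -> is_uniformizer vD pi ->
  forall n s w, L s w -> L (s + n%:R * vD pi) (act w (pi ^+ n)).
Proof.
move=> Hm [_ [Hpi _]] Hu n; elim: n => [|n IH] s w Lsw.
  by rewrite mul0r addr0 expr0 (proj1 (proj2 (proj2 (proj2 Hm)))).
rewrite exprS (proj1 (proj2 (proj2 Hm))).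
have L1 : L (s + vD pi) (act w pi) by apply/(Hpi _ Hu); exists w.
have := IH _ _ L1; congr L; rewrite mulrSr; lra.
Qed.

Lemma lf_pi_neg {R : realType} {k : fieldType} {Dl : falgType k} {W : vectType k}
  (vD : Dl -> R) (act : W -> Dl -> W) (L : R -> W -> Prop) (pi : Dl) :
  is_division Dl -> right_module act -> lattice_function vD act L -> is_uniformizer vD pi ->
  forall n s w, L s w -> L (s - n%:R * vD pi) (act w (pi ^+ n)^-1).
Proof.
move=> Hd Hm [_ [Hpi _]] Hu n.
have [_ [_ [HM [H1 _]]]] := Hm.
have upi : pi \is a GRing.unit by apply: Hd; case: Hu.
elim: n => [|n IH] s w Lsw.
  by rewrite mul0r subr0 expr0 invr1 H1.
rewrite exprSr invrM ?unitrX // HM.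
have L1 : L (s - vD pi) (act w pi^-1).
  have : L (s - vD pi + vD pi) w by rewrite subrK.
  move/(Hpi _ Hu) => [u Lu ->]; by rewrite -HM mulrV // H1.
have := IH _ _ L1; congr L; rewrite mulrSr; lra.
Qed.

Lemma lf_shift {R : realType} {k : fieldType} {Dl : falgType k} {W : vectType k}
  (vD : Dl -> R) (act : W -> Dl -> W) (L : R -> W -> Prop) (pi d : Dl) :
  is_valuation vD -> is_division Dl -> right_module act ->
  lattice_function vD act L -> is_uniformizer vD pi -> d != 0 ->
  forall s w, L s w -> L (s + vD d) (act w d).
Proof.
move=> Hv Hd Hm HL Hu nd s w Lsw.
have [q Hq] := val_multiple vD pi d Hv Hd Hu nd.
have npi : pi != 0 by case: Hu.
have npq : pi ^ q != 0 by apply: expz_neq0.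
have upq : pi ^ q \is a GRing.unit by apply: Hd.
set u := (pi ^ q)^-1 * d.
have nu : u != 0 by apply: divM_neq0 => //; rewrite invr_eq0.
have vu : vD u = 0.
  rewrite /u (proj1 Hv) ?invr_eq0 // (val_inv vD) // (val_expz vD) //; lra.
have Ed : d = pi ^ q * u by rewrite /u mulVKr.
have [_ [_ [HM _]]] := Hm.
have L1 : forall q : int, L (s + q%:~R * vD pi) (act w (pi ^ q)).
  case=> n; first exact: (lf_pi_pos vD act L pi Hm HL Hu n s w Lsw).
  rewrite NegzE /=; have := lf_pi_neg vD act L pi Hd Hm HL Hu n.+1 s w Lsw.
  by congr L; rewrite mulNr.
rewrite Hq [in act w d]Ed HM.
have [HLf _] := HL.
apply: (full_latticeA _ _ _ Hv Hm (HLf _)); last exact: L1.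
by right; rewrite vu.
Qed.


Lemma mk_lfun {k : fieldType} {W : vectType k} (f : W -> W) :
  (forall v w, f (v + w) = f v + f w) -> (forall (c : k) v, f (c *: v) = c *: f v) ->
  exists F : 'End(W), forall w, F w = f w.
Proof.
move=> Ha Hs.
have lf : linear f by move=> c u v; rewrite Ha Hs.
pose F : {linear W -> W} := HB.pack f (GRing.isLinear.Build k W W *:%R f lf).
exists (linfun F) => w; by rewrite lfunE.
Qed.

Lemma central_End {R : realType} {k : fieldType} {Dl : falgType k} {W : vectType k}
  (nu : k -> R) (vD : Dl -> R) (act : W -> Dl -> W) (L : R -> W -> Prop) (d : Dl) :
  discrete_normalized nu -> valuation_extending nu vD -> is_division Dl ->
  right_module act -> lattice_function vD act L -> d != 0 ->
  (forall d', d * d' = d' * d) ->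
  exists2 f : 'End(W), (forall w, f w = act w d) & End_lf act L (vD d) f.
Proof.
move=> Hdn Hext Hd Hm HL nd Hc.
have [HA [HD [HM [H1 HS]]]] := Hm.
have [F HF] := @mk_lfun k W (fun w => act w d) (fun v w => HA v w d)
   (fun c v => act_scal act Hm v d c).
exists F => //; split.
  by move=> w d'; rewrite !HF -!HM Hc.
have [pi Hpi] := unif_exists nu vD Hdn Hext Hd.
move=> s w Lw; rewrite HF.
exact: (lf_shift vD act L pi d (proj1 Hext) Hd Hm HL Hpi nd).
Qed.

Lemma nu_half {R : realType} {k : fieldType} (nu : k -> R) :
  is_valuation nu -> (2%:R : k) != 0 -> nu 2%:R = 0 -> nu (2%:R^-1) = 0.
Proof.
move=> Hv n2 v2; have ni : (2%:R : k)^-1 != 0 by rewrite invr_eq0.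
have := (proj1 Hv) _ _ n2 ni; rewrite mulfV // => /(_ (oner_neq0 _)).
rewrite val1 // v2; lra.
Qed.


Theorem mainTheorem5
  (R : realType)
  (* the non-Archimedean local field k, residue characteristic <> 2 *)
  (k : fieldType) (nu : k -> R)
  (Hk : nonarch_local_field nu) (Hk2 : residue_char_not_2 nu)
  (* central division k-algebra D, extended valuation, continuous involution *)
  (D : falgType k) (nuD : D -> R) (rho : D -> D)
  (HD : central_division D) (HnuD : valuation_extending nu nuD)
  (Hrho : continuous_involution nuD rho)
  (* right D-space V with non-degenerate eps-hermitian form h *)
  (V : vectType k) (actV : V -> D -> V) (HV : right_module actV)
  (eps : D) (h : V -> V -> D) (Hh : nondeg_eps_hermitian actV rho eps h)
  (* adjoint involution sigma on A = End_D(V) *)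
  (sigma : 'End(V) -> 'End(V)) (Hsigma : adjoint_inv actV h sigma)
  (* beta in g, separable, k[beta] = prod_{i in J} E_i with idempotents e i *)
  (beta : 'End(V)) (Hbeta : in_g actV sigma beta) (Hsep : separable_elt beta)
  (J : finType) (e : J -> 'End(V)) (He : field_decomposition beta e)
  (Jp : {set J}) (HJp : Jplus_choice sigma e Jp)
  (* Delta_i, W_i, phi_i, h_i *)
  (Dl : J -> falgType k) (nuDl : forall i, Dl i -> R)
  (io : forall i, 'End(V) -> Dl i)
  (W : J -> vectType k) (actW : forall i, W i -> Dl i -> W i)
  (phi : forall i, 'End(W i) -> 'End(V))
  (rhoW : forall i, Dl i -> Dl i) (epsW : forall i, Dl i)
  (hW : forall i, W i -> W i -> Dl i)
  (HDl : forall i, central_division_over beta (e i) (io i))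
  (HnuDl : forall i, valuation_extending nu (nuDl i))
  (HW : forall i, right_module (actW i))
  (Hphi : forall i, Ei_algebra_iso actV beta (e i) (io i) (actW i) (phi i))
  (HrhoW : forall i, in_Jun sigma e i -> is_involution (rhoW i))
  (HhW : forall i, in_Jun sigma e i ->
           nondeg_eps_hermitian (actW i) (rhoW i) (epsW i) (hW i))
  (HadW : forall i, in_Jun sigma e i ->
           adjoint_is_transported sigma (actW i) (hW i) (phi i))
  (* the excluded case *)
  (Hnexc : ~ excluded_case rho eps h)
  (* x in B(H), Lambda in Latt^1_h(V) *)
  (x : forall i, R -> W i -> Prop)
  (Hx : in_BH sigma e Jp nuDl actW hW x)
  (Lambda : R -> V -> Prop) (HL : self_dual_lf nuD actV h Lambda)
  (HEq : forall (t : R) (a : 'End(V)),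
      (End_lf actV Lambda t a /\ in_frak_h actV sigma beta a) <->
      LF actV sigma e Jp actW phi x t a) :
  forall i : J, End_lf actV Lambda 0 (e i).
Proof.
have Hm := HV.
have Hr := proj1 Hrho.
have HvD := proj1 HnuD.
have HLl := proj1 HL.
have Hs := Hsigma.
have [Db Sb0] := Hbeta.
have Sb : sigma beta = - beta.
  by apply/eqP; rewrite -addr_eq0 addrC; apply/eqP.
have [Ke [Ene [Eid [Eorth [Esum Einv]]]]] := He.
have De : forall i, D_linear actV (e i) :=
  fun i => kpoly_Dlin actV beta (e i) Hm Db (Ke i).
have Dsig : forall a, D_linear actV a -> D_linear actV (sigma a) := proj1 Hs.
have sig0' : sigma 0 = 0 := sig0 Hm Hr Hh Hs.
have LF1 : forall i t y,
   (in_Jun sigma e i ->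
      (exists2 f, End_lf (actW i) (x i) t f & y = phi i f) /\ in_g actV sigma y) ->
   (i \in Jp -> exists2 f, End_lf (actW i) (x i) t f & y = phi i f - sigma (phi i f)) ->
   (~ in_Jun sigma e i -> i \notin Jp -> y = 0) ->
   LF actV sigma e Jp actW phi x t y.
  move=> i t y H1 H2 H3.
  exists (fun j => if j == i then y else 0); split.
    by rewrite (bigD1 i) //= ?eqxx big1 ?addr0 // => j /negbTE ->.
  move=> j; case: (eqVneq j i) => [->|ji]; first by rewrite /= ?eqxx; split; [|split].
  have phi0 : phi j 0 = 0.
    have [_ [_ [_ [HA _]]]] := Hphi j.
    have := HA 0 0 (Dlin_0 _ (HW j)) (Dlin_0 _ (HW j)); rewrite addr0.
    by move/(congr1 (fun x => x - phi j 0)); rewrite subrr addrK.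
  have Lj : (in_Jun sigma e j \/ j \in Jp) ->
            lattice_function (nuDl j) (actW j) (x j).
    case=> H; [exact: (proj1 ((proj1 (Hx j)) H)) | exact: (proj2 (Hx j)) H].
  split; [|split].
  - move=> Hj; split; last by split; [exact: (Dlin_0 _ Hm) | rewrite sig0' addr0].
    exists 0; last by rewrite phi0.
    exact: (End_0 _ _ _ _ (HW j) (Lj (or_introl Hj))).
  - move=> Hj; exists 0; last by rewrite phi0 sig0' subr0.
    exact: (End_0 _ _ _ _ (HW j) (Lj (or_intror Hj))).
  - by [].
have Jun_beta : forall i, in_Jun sigma e i -> (e i \o beta)%VF != 0 ->
    End_lf actV Lambda 0 (e i).
  move=> i Hi nzb.
  set z := (e i \o beta)%VF.
  have Kz : in_kpoly beta z := kpoly_comp _ _ _ (Ke i) (kpoly_beta beta).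
  have Ez : (e i \o z)%VF = z by rewrite /z comp_lfunA Eid.
  have nEz : (e i \o z)%VF != 0 by rewrite Ez.
  have [b Kb Hb] := Einv i z Kz nEz.
  rewrite Ez in Hb.
  set w := (e i \o b)%VF.
  have Cb := kpoly_commb _ _ (Ke i).
  have Ze : (z \o e i)%VF = z.
    by rewrite /z -comp_lfunA -Cb comp_lfunA Eid.
  have zw : (z \o w)%VF = e i by rewrite /w comp_lfunA Ze Hb.
  have Dz : D_linear actV z by apply: Dlin_comp.
  have Dw : D_linear actV w by apply: Dlin_comp => //; exact: kpoly_Dlin Hm Db Kb.
  have Sz : sigma z = - z.
    by rewrite /z (sig_comp Hr Hh Hs (De i) Db) Sb Hi comp_lfunNl Cb.
  have wE : (e i \o w)%VF = w by rewrite /w comp_lfunA Eid.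
  have Swe : (sigma w \o e i)%VF = sigma w.
    by rewrite -{2}wE (sig_comp Hr Hh Hs (De i) Dw) Hi.
  have S1 : (sigma w \o (- z))%VF = e i.
    by rewrite -Sz -(sig_comp Hr Hh Hs Dz Dw) zw Hi.
  have Sw : sigma w = - w.
    apply: oppr_inj; rewrite opprK.
    by rewrite -{1}Swe -zw comp_lfunA -comp_lfunNl -comp_lfunNr S1 wE.
have Ezi : in_Ei beta (e i) z by exists beta => //; exact: kpoly_beta.
  have Ewi : in_Ei beta (e i) w by exists b.
  have [Hdiv [ioA [ioM [ioZ [io1 [ioInj ioC]]]]]] := HDl i.
  have dzw : io i z * io i w = 1 by rewrite -ioM // zw io1.
  have ndz : io i z != 0.
    by apply/eqP => E; move: dzw; rewrite E mul0r => /eqP; rewrite eq_sym oner_eq0.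
  have ndw : io i w != 0.
    by apply/eqP => E; move: dzw; rewrite E mulr0 => /eqP; rewrite eq_sym oner_eq0.
  have HLi : lattice_function (nuDl i) (actW i) (x i) := proj1 ((proj1 (Hx i)) Hi).
  have [_ [_ [_ [_ [_ [_ Hlast]]]]]] := Hphi i.
  have notJp : i \notin Jp.
    by apply/negP => /(proj1 HJp i); rewrite Hi eqxx.
  have Lc : forall a, in_Ei beta (e i) a -> D_linear actV a -> sigma a = - a ->
      io i a != 0 -> End_lf actV Lambda (nuDl i (io i a)) a.
    move=> a Ea Da Sa na.
    have ca := proj2 (ioC (io i a)) (ex_intro2 _ _ a Ea erefl).
    have [f Hf Lf] := central_End nu (nuDl i) (actW i) (x i) (io i a)
       (proj1 (proj2 Hk)) (HnuDl i) Hdiv (HW i) HLi na ca.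
    have pa : phi i f = a := Hlast a f Ea (proj1 Lf) Hf.
    have : LF actV sigma e Jp actW phi x (nuDl i (io i a)) a.
      apply: (LF1 i) => [_|H|H].
      - split; first by exists f.
        by split => //; rewrite Sa subrr.
      - by move: notJp; rewrite H.
      - by exfalso; apply: H.
    by move/(proj2 (HEq _ _)) => [].
  have Lz := Lc z Ezi Dz Sz ndz.
  have Lw := Lc w Ewi Dw Sw ndw.
  have := End_comp _ _ _ _ _ _ Lz Lw; rewrite zw.
  suff -> : nuDl i (io i z) + nuDl i (io i w) = 0 by [].
  have [Hvi _] := HnuDl i.
  rewrite -(proj1 Hvi) // ?dzw ?val1 // oner_neq0 //.
have SK : forall a, in_kpoly beta a -> in_kpoly beta (sigma a) :=
  fun a Ka => sig_kpoly beta a Hm HD Hr Hh Hs Db Sb Ka.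
have Sidem : forall i, (sigma (e i) \o sigma (e i))%VF = sigma (e i).
  by move=> i; rewrite -(sig_comp Hr Hh Hs (De i) (De i)) Eid.
have orth : forall i, ~ in_Jun sigma e i -> (e i \o sigma (e i))%VF = 0.
  move=> i Hi.
  case: (idem_field beta e i (sigma (e i)) He (SK _ (Ke i)) (Sidem i)) => // H.
  exfalso; apply: Hi; rewrite /in_Jun.
  have := congr1 sigma H.
  rewrite (sig_comp Hr Hh Hs (De i) (Dsig _ (De i))) (sig_inv Hr Hh Hs (De i)) H.
  by move=> <-.
have partner : forall i, ~ in_Jun sigma e i -> exists j, i != j /\ sigma (e i) = e j.
  move=> i Hi.
  set f := sigma (e i).
  have Kf : in_kpoly beta f := SK _ (Ke i).
  have nf : f != 0.
    apply/eqP => E; move: (Ene i); rewrite -(sig_inv Hr Hh Hs (De i)) -/f E sig0'.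
    by rewrite eqxx.
  have : [exists j, (f \o e j)%VF != 0].
    apply: contraR nf; rewrite negb_exists => /forallP H.
    rewrite -[f]comp_lfun1r -Esum comp_sumr big1 // => j _.
    by move: (H j); rewrite negbK => /eqP.
  case/existsP=> j nj.
  have Ej : (e j \o f)%VF = e j.
    case: (idem_field beta e j f He Kf (Sidem i)) => // H.
    by move: nj; rewrite (kpoly_comm _ _ _ Kf (Ke j)) H eqxx.
  have Kg := SK _ (Ke j).
  have Eg : (e i \o sigma (e j))%VF = sigma (e j).
    have := congr1 sigma Ej.
    rewrite (sig_comp Hr Hh Hs (De j) (Dsig _ (De i))) (sig_inv Hr Hh Hs (De i)).
    by [].
  have ng : sigma (e j) != 0.
    apply/eqP => E; move: (Ene j); rewrite -(sig_inv Hr Hh Hs (De j)) E sig0'.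
    by rewrite eqxx.
  have Sj : sigma (e j) = e i.
    case: (idem_field beta e i (sigma (e j)) He Kg (Sidem j)) => H.
      by move: ng; rewrite -Eg H eqxx.
    by rewrite -Eg H.
  exists j; split.
    apply/eqP => E; apply: Hi; rewrite /in_Jun.
    by move: Sj; rewrite -E.
  by rewrite /f -Sj (sig_inv Hr Hh Hs (De j)).
have half : in_o nuD ((2%:R^-1 : k)%:A).
  have [n2 v2] := Hk2.
  by right; rewrite (proj2 HnuD) ?invr_eq0 // (nu_half nu (proj1 Hk)).
have Jp_case : forall p, p \in Jp ->
    End_lf actV Lambda 0 (e p) /\ End_lf actV Lambda 0 (sigma (e p)).
  move=> p Hp.
  have notJun : ~ in_Jun sigma e p.
    by move=> H; move: (proj1 HJp p Hp); rewrite H eqxx.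
  set a := e p; set b := sigma (e p).
  set u := a - b.
  have [_ [_ [_ [_ [_ [phi1 _]]]]]] := Hphi p.
  have Lu : End_lf actV Lambda 0 u.
    have : LF actV sigma e Jp actW phi x 0 u.
      apply: (LF1 p) => [H|_|H].
      - by exfalso; apply: notJun.
      - by exists \1%VF; [exact: End_id | rewrite phi1].
      - by move: H; rewrite Hp.
    by move/(proj2 (HEq _ _)) => [].
  have ab : (a \o b)%VF = 0 := orth p notJun.
  have ba : (b \o a)%VF = 0.
    by rewrite /b (kpoly_comm _ _ _ (SK _ (Ke p)) (Ke p)).
  have uu : (u \o u)%VF = a + b.
    rewrite /u comp_lfunDl !comp_lfunDr !comp_lfunNl !comp_lfunNr.
    by rewrite /a Eid -/a ab ba Sidem oppr0 opprK !addr0 add0r.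
  have Luu : End_lf actV Lambda 0 (u \o u)%VF.
    by have := End_comp _ _ _ _ _ _ Lu Lu; rewrite addr0.
  have two : forall c : 'End(V), (2%:R^-1 : k) *: (c + c) = c.
    by move=> c; rewrite -mulr2n -scaler_nat scalerA mulVf ?scale1r //; case: Hk2.
  split.
  - have -> : a = (2%:R^-1 : k) *: (u + (u \o u)%VF).
      by rewrite uu /u addrACA addNr addr0 two.
    apply: (@End_scale _ _ _ _ nuD) => //.
    exact: (@End_add _ _ _ _ nuD).
  - have -> : b = (2%:R^-1 : k) *: ((u \o u)%VF - u).
      by rewrite uu /u opprB [a + b]addrC addrACA addrN addr0 two.
    apply: (@End_scale _ _ _ _ nuD) => //.
    exact: (@End_sub _ _ _ _ nuD).
have nonJun : forall i, ~ in_Jun sigma e i -> End_lf actV Lambda 0 (e i).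
  move=> i Hi; case: (boolP (i \in Jp)) => Hip; first exact: (proj1 (Jp_case i Hip)).
  have [j [ij Ej]] := partner i Hi.
  have Hjp : j \in Jp.
    by have := proj2 HJp i j ij Ej; rewrite (negbTE Hip); case: (j \in Jp).
  have := proj2 (Jp_case j Hjp).
  by rewrite -Ej (sig_inv Hr Hh Hs (De i)).
have uniq0 : forall i j, i != j -> (e i \o beta)%VF = 0 -> (e j \o beta)%VF = 0 -> False.
  move=> i j ij Hi0 Hj0.
  have [q Eq] := Ke j.
  have A1 : (e i \o e j)%VF = q`_0 *: e i.
    rewrite [in LHS]Eq; exact: (comp_peval_killed beta (e i) q Hi0).
  have A2 : (e j \o e j)%VF = q`_0 *: e j.
    rewrite [in X in (_ \o X)%VF]Eq; exact: (comp_peval_killed beta (e j) q Hj0).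
  case: (eqVneq q`_0 0) => [q0|nq0].
    by move: A2; rewrite Eid q0 scale0r => /eqP; rewrite (negbTE (Ene j)).
  move: A1; rewrite Eorth // => /eqP; rewrite eq_sym scaler_eq0 (negbTE nq0).
  by rewrite (negbTE (Ene i)).
have Jun_zero : forall i, (e i \o beta)%VF = 0 -> End_lf actV Lambda 0 (e i).
  move=> i Hz.
  have others : forall j, j != i -> End_lf actV Lambda 0 (e j).
    move=> j ji; case: (classic (in_Jun sigma e j)) => Hj; last exact: nonJun.
    apply: Jun_beta => //; apply/eqP => Hzj.
    by apply: (uniq0 i j) => //; rewrite eq_sym.
  have -> : e i = \1%VF - \sum_(j | j != i) e j.
    by rewrite -Esum (bigD1 i) //= addrK.
  apply: (@End_sub _ _ _ _ nuD) => //; first exact: End_id.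
  exact: (@End_sum _ _ _ _ _ nuD).
move=> i; case: (classic (in_Jun sigma e i)) => Hi; last exact: nonJun.
case: (eqVneq (e i \o beta)%VF 0) => Hz; first exact: Jun_zero.
exact: Jun_beta.
Qed.
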